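(* Let $H$ be a $p$-variate cumulative distribution function with continuous margins $F_1,\ldots,F_p$, let $\hat H_n$ be random $p$-variate cumulative distribution functions and $\hat F_{n,1},\ldots,\hat F_{n,p}$ random univariate cumulative distribution functions, and suppose there exists $0<r_n\to\infty$ such that, in $\ell^\infty(\mathbb R^p)\times\ell^\infty(\mathbb R)\times\cdots\times\ell^\infty(\mathbb R)$ with the topology of uniform convergence, \[\bigl(r_n(\hat H_n-H);\,r_n(\hat F_{n,1}-F_1),\ldots,r_n(\hat F_{n,p}-F_p)\bigr)\rightsquigarrow(\alpha\circ\mathbf F;\,\beta_1\circ F_1,\ldots,\beta_p\circ F_p),\qquad n\to\infty,\] where $\alpha$ is a random element of $\ell^\infty([0,1]^p)$ and $\beta_j$ random elements of $\ell^\infty([0,1])$ such that $\alpha\circ\mathbf F$ and $\beta_j\circ F_j$ have continuous trajectories on $[-\infty,\infty]^p$ and $[-\infty,\infty]$, respectively, almost surely. Then, with probability one, the trajectories of $\alpha$ and $\beta_1,\ldots,\beta_p$ are continuous (on $[0,1]^p$ and $[0,1]$ respectively).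
   Context: $\mathbf F(\mathbf x)=(F_1(x_1),\ldots,F_p(x_p))$, with $F_j(-\infty)=0$, $F_j(+\infty)=1$. $\ell^\infty(T)$ is the space of bounded real functions on $T$ with the supremum norm; $\rightsquigarrow$ denotes Hoffmann-Jørgensen weak convergence. *)

(* Defs.v *)
From HB Require Import structures.
From mathcomp Require Import all_boot all_order all_algebra.
From mathcomp Require Import all_classical all_reals all_analysis.
Unset Printing Implicit Defensive.
Import Order.TTheory GRing.Theory Num.Theory.
Import numFieldNormedType.Exports.
Local Open Scope classical_set_scope.
Local Open Scope ring_scope.

Definition orthant {R : realType} {p : nat} (a : 'I_p -> R) : set ('I_p -> R) :=
  [set x | forall j, x j <= a j].

(* R^p with its Borel sigma-algebra, presented as the sigma-algebra generated
   by the lower orthants (which generate the Borel sets of R^p) *)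
Definition orthants (R : realType) (p : nat) : set (set ('I_p -> R)) :=
  [set orthant a | a in [set: 'I_p -> R]].
Definition Rp (R : realType) (p : nat) := g_sigma_algebraType (orthants R p).

Definition is_cdf_p {R : realType} {p : nat} (H : ('I_p -> R) -> R) : Prop :=
  exists mu : probability (Rp R p) R, forall x, H x = fine (mu (orthant x)).

Definition is_cdf_p_margins {R : realType} {p : nat} (H : ('I_p -> R) -> R)
  (F : 'I_p -> R -> R) : Prop :=
  exists mu : probability (Rp R p) R,
    (forall x, H x = fine (mu (orthant x))) /\
    (forall j t, F j t = fine (mu [set y : 'I_p -> R | y j <= t])).

Definition is_cdf1 {R : realType} (F : R -> R) : Prop :=
  exists mu : probability R R, forall t, F t = fine (mu [set s : R | s <= t]).

Definition ext_cdf {R : realType} (F : R -> R) (x : \bar R) : R :=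
  match x with
  | EFin t => F t
  | +oo%E => 1
  | -oo%E => 0
  end.

Definition bounded_on {R : realType} {T : Type} (D : set T) (z : T -> R) : Prop :=
  exists M : R, forall x, D x -> `|z x| <= M.

Definition sup_close {R : realType} {T : Type} (D : set T) (z w : T -> R) (d : R) :=
  forall x, D x -> `|z x - w x| <= d.

Definition linf_open {R : realType} {T : Type} (D : set T) (A : set (T -> R)) :=
  forall z, A z -> bounded_on D z ->
    exists2 d : R, 0 < d & forall w, bounded_on D w -> sup_close D z w d -> A w.

Definition linf_borel {R : realType} {d} {Om : measurableType d} {T : Type}
  (D : set T) (X : Om -> T -> R) : Prop :=
  (forall w, bounded_on D (X w)) /\
  (forall A, linf_open D A -> measurable (X @^-1` A)).

Definition bcont_linf {R : realType} {T : Type} (f : (T -> R) -> R) : Prop :=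
  (exists M : R, forall z, bounded_on setT z -> `|f z| <= M) /\
  (forall z, bounded_on setT z -> forall e : R, 0 < e ->
     exists2 d : R, 0 < d & forall w, bounded_on setT w ->
       sup_close setT z w d -> `|f z - f w| < e).

(* outer expectation E^* X = inf { E U : U >= X, U measurable and integrable }
   (for bounded X, which is the only use below, this is the usual outer expectation) *)
Definition outer_expect {R : realType} {d} {Om : measurableType d}
  (P : probability Om R) (X : Om -> R) : \bar R :=
  ereal_inf [set (\int[P]_w (U w)%:E)%E | U in
    [set U : Om -> R | measurable_fun setT U /\ P.-integrable setT (EFin \o U)
                       /\ (forall w, X w <= U w)]].

(* Hoffmann-Jorgensen weak convergence X_n ~> X in l^infty(T):
   X is Borel measurable and E^* f(X_n) -> E f(X) for all bounded continuous f *)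
Definition hj_weak_cvg {R : realType} {T : Type}
  {dn : nat -> measure_display} {Omn : forall n, measurableType (dn n)}
  (Pn : forall n, probability (Omn n) R) (Xn : forall n, Omn n -> T -> R)
  {d} {Om : measurableType d} (P : probability Om R) (X : Om -> T -> R) : Prop :=
  linf_borel setT X /\
  (forall n w, bounded_on setT (Xn n w)) /\
  (forall f, bcont_linf f ->
     (fun n => outer_expect (Pn n) (fun w => f (Xn n w))) @ \oo
       --> (\int[P]_w (f (X w))%:E)%E).

(* the product l^infty(R^p) x l^infty(R) x ... x l^infty(R) (p factors),
   encoded as l^infty of the disjoint union R^p + {1..p} x R; the sup metric on
   the disjoint union is the max of the sup metrics, i.e. the product topology *)
Definition prodIdx (R : realType) (p : nat) := (('I_p -> R) + ('I_p * R))%type.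

Definition pack {R : realType} {p : nat} (h : ('I_p -> R) -> R)
  (g : 'I_p -> R -> R) : prodIdx R p -> R :=
  fun s => match s with inl x => h x | inr jt => g jt.1 jt.2 end.

Definition cube01 (R : realType) (p : nat) : set ('I_p -> R) :=
  [set x | forall j, 0 <= x j <= 1].
Definition unit01 (R : realType) : set R := [set t | 0 <= t <= 1].

(* Main.v *)
Require Import Defs.
From HB Require Import structures.
From mathcomp Require Import all_boot all_order all_algebra.
From mathcomp Require Import all_classical all_reals all_analysis.
From mathcomp Require Import lra.
Import Order.TTheory GRing.Theory Num.Theory.
Import numFieldNormedType.Exports.
Local Open Scope classical_set_scope.
Local Open Scope ring_scope.
Lemma cvg_ptws (I : Type) (V : topologicalType) (X : Type)
  (F : set_system X) {FF : Filter F} (g : X -> {ptws I -> V}) (f : {ptws I -> V}) :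
  (forall i, (fun x => g x i) @ F --> f i) -> g @ F --> f.
Proof.
move=> H.
apply/cvg_sup => i A /=.
rewrite /nbhs /= => -[B [[U Uop UB] Bf BA]].
subst B.
have : F ((fun x => g x i) @^-1` U) by apply: (H i); apply: open_nbhs_nbhs.
by apply: filterS => x Ux; apply: BA.
Qed.
Lemma closed_map_within (K Y : topologicalType) (R : realType) (G : K -> Y)
  (f : Y -> R) (S : set Y) :
  compact [set: K] -> hausdorff_space Y -> continuous G ->
  (forall y, S y -> exists x, G x = y) -> continuous (f \o G) ->
  {within S, continuous f}.
Proof.
move=> cK hY cG sG cfG.
rewrite continuous_subspace_in => u; rewrite inE => Su.
apply/cvgrPdist_lt => e e0.
set C := [set x | e <= `|f u - f (G x)|].
have clD : closed [set r : R | e <= `|f u - r|].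
  have -> : [set r : R | e <= `|f u - r|] = ~` ball (f u) e.
    by apply/seteqP; split => r /=; rewrite -ball_normE /= leNgt => /negP.
  exact: open_closedC (ball_open _ _).
have clC : closed C.
  have -> : C = (f \o G) @^-1` [set r : R | e <= `|f u - r|] by [].
  by apply: preimage_closed => // x _; apply: cfG.
have cpC : compact C by apply: (subclosed_compact clC cK).
have cpGC : compact (G @` C) by apply: continuous_compact => //; apply: continuous_subspaceT.
have clGC : closed (G @` C) by apply: compact_closed.
have nGC : nbhs u (~` (G @` C)).
  apply: open_nbhs_nbhs; split; first exact: closed_openC.
  move=> [x Cx Gxu]; move: Cx; rewrite /C /= Gxu subrr normr0.
  by rewrite leNgt e0.
apply/nbhs_subspace_ex => //; exists (~` (G @` C)) => //.
apply/seteqP; split => v [h Sv]; split => //.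
  move=> [x Cx Gxv]; move: Cx; rewrite /C /= Gxv leNgt.
  by move: h => /= ->.
have [x Gxv] := sG v Sv.
rewrite /= ltNge; apply/negP => hx; apply: h; exists x => //.
by rewrite /C /= Gxv.
Qed.
Lemma ereal_compactT (R : realType) : compact [set: \bar R].
Proof.
have -> : [set: \bar R] = (@expand R) @` `[-1, 1]%classic.
  apply/seteqP; split => y // _; exists (contract y); last exact: contractK.
  by rewrite /= in_itv /=; have := contract_le1 y; rewrite ler_norml.
apply: continuous_compact; last exact: segment_compact.
rewrite continuous_subspace_in => x; rewrite inE /= in_itv /= => x1.
apply/cvg_ballP => e e0.
apply/nbhs_subspace_ex; first by rewrite /= in_itv /= x1.
exists (ball x e); first exact: nbhsx_ballx.
have x1' : `|x| <= 1 by rewrite ler_norml.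
apply/seteqP; split => t [h At]; split => //; move: h; rewrite /ball /=;
  rewrite /ereal_ball !expandK ?inE //.
all: by move: At; rewrite /= in_itv /= => ?; rewrite ler_norml.
Qed.
Lemma margin_lims (R : realType) (p : nat) (H : ('I_p -> R) -> R)
  (F : 'I_p -> R -> R) :
  is_cdf_p_margins H F -> forall j,
  (forall e : R, 0 < e -> exists M : R, forall t, M < t -> `|1 - F j t| < e) /\
  (forall e : R, 0 < e -> exists M : R, forall t, t < M -> `|F j t| < e).
Proof.
move=> [mu [_ hF]] j.
pose S (t : R) := [set y : 'I_p -> R | y j <= t].
have mS t : measurable (S t : set (Rp R p)).
  have -> : S t = \bigcup_n orthant (fun i => if i == j then t else n%:R).
    apply/seteqP; split => y /=.
      move=> hy; exists (Num.trunc (\big[Order.max/0]_i `|y i|)).+1 => //= i.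
      case: eqP => [->//|_]; apply/ltW/(le_lt_trans _ (truncnS_gt _)).
      exact: le_trans (ler_norm _) (le_bigmax _ (fun i => `|y i|) i).
    by move=> [n _ /(_ j)]; rewrite eqxx.
  apply: bigcupT_measurable => n; apply: sub_sigma_algebra; by eexists.
have mle t : (mu (S t) <= 1)%E := probability_le1 mu (mS t).
have m0 t : (0 <= mu (S t))%E := measure_ge0 mu (S t).
have mE t : mu (S t) = (F j t)%:E.
  by rewrite hF fineK // ge0_fin_numE // (le_lt_trans (mle t)) // ltry.
have Fle1 t : F j t <= 1 by rewrite -lee_fin -mE.
have Fge0 t : 0 <= F j t by rewrite -lee_fin -mE.
have Fmono s t : s <= t -> F j s <= F j t.
  move=> st; rewrite -lee_fin -!mE; apply: le_measure; rewrite ?inE; try exact: mS.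
  by move=> y /= ys; apply: le_trans ys st.
split.
- have cv : (fun n : nat => F j n%:R) @ \oo --> (1 : R).
    have U1 : \bigcup_n S n%:R = setT.
      apply/seteqP; split => y // _; exists (Num.trunc (y j)).+1 => //.
      exact/ltW/truncnS_gt.
    have hom : {homo (fun n : nat => S n%:R) : n m / (n <= m)%N >-> (n <= m)%O}.
      by move=> n m nm; apply/subsetPset => y /= yn; apply: le_trans yn _; rewrite ler_nat.
    have mT : mu (\bigcup_n S n%:R) = 1%E by rewrite U1; exact: probability_setT.
    have : (mu \o (fun n : nat => S n%:R)) @ \oo --> 1%E.
      rewrite -mT; apply: nondecreasing_cvg_mu => //.
      exact: bigcupT_measurable.
    move=> /fine_cvgP [_].
    have -> : fine \o (mu \o (fun n : nat => S n%:R)) = (fun n : nat => F j n%:R).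
      by apply/funext => n /=; rewrite mE.
    done.
  move=> e e0; have /cvgrPdist_lt/(_ e e0) [N _ hN] := cv.
  exists N%:R => t Nt; have := hN N (leqnn N) => /=.
  have := Fmono _ _ (ltW Nt); have := Fle1 t; have := Fle1 N%:R.
  rewrite !ger0_norm ?subr_ge0 //; lra.
- have cv : (fun n : nat => F j (- n%:R)) @ \oo --> (0 : R).
    have U0 : \bigcap_n S (- n%:R) = set0.
      apply/seteqP; split => y // /(_ (Num.trunc (- y j)).+1 I) /=.
      have := truncnS_gt (- y j); rewrite /S /=; lra.
    have hom : {homo (fun n : nat => S (- n%:R)) : n m / (n <= m)%N >-> (m <= n)%O}.
      by move=> n m nm; apply/subsetPset => y /= yn; apply: le_trans yn _; rewrite lerN2 ler_nat.
    have m0' : mu (\bigcap_n S (- n%:R)) = 0%E by rewrite U0; exact: measure0.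
    have : (mu \o (fun n : nat => S (- n%:R))) @ \oo --> 0%E.
      rewrite -m0'; apply: nonincreasing_cvg_mu => //.
        exact: (le_lt_trans (mle _) (ltry _)).
      exact: bigcapT_measurable.
    move=> /fine_cvgP [_].
    have -> : fine \o (mu \o (fun n : nat => S (- n%:R))) = (fun n : nat => F j (- n%:R)).
      by apply/funext => n /=; rewrite mE.
    done.
  move=> e e0; have /cvgrPdist_lt/(_ e e0) [N _ hN] := cv.
  exists (- N%:R) => t Nt; have := hN N (leqnn N) => /=.
  have := Fmono _ _ (ltW Nt); have := Fge0 t; have := Fge0 (- N%:R).
  rewrite sub0r normrN !ger0_norm //; lra.
Qed.
Lemma ext_cdf_cont (R : realType) (F : R -> R) : continuous F ->
  (forall e : R, 0 < e -> exists M : R, forall t, M < t -> `|1 - F t| < e) ->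
  (forall e : R, 0 < e -> exists M : R, forall t, t < M -> `|F t| < e) ->
  continuous (ext_cdf F : \bar R -> R).
Proof.
move=> cF l1 l0 x; apply/cvgrPdist_lt => e e0; case: x => [r| |].
- exact: ((cvgrPdist_lt _ _).1 (cF r) e e0).
- have [M hM] := l1 e e0; exists M; split; first exact: num_real.
  case => [t /= Mt| _ |] //=; first by rewrite lte_fin in Mt; exact: hM.
  by rewrite subrr normr0.
- have [M hM] := l0 e e0; exists M; split; first exact: num_real.
  case => [t /= Mt| |_] //=; first by rewrite lte_fin in Mt; rewrite sub0r normrN; exact: hM.
  by rewrite subrr normr0.
Qed.

Lemma ext_cdf_surj (R : realType) (F : R -> R) : continuous F ->
  (forall e : R, 0 < e -> exists M : R, forall t, M < t -> `|1 - F t| < e) ->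
  (forall e : R, 0 < e -> exists M : R, forall t, t < M -> `|F t| < e) ->
  forall v : R, 0 <= v <= 1 -> exists x, ext_cdf F x = v.
Proof.
move=> cF l1 l0 v /andP[v0 v1].
have [->|vn0] := eqVneq v 0; first by exists -oo%E.
have [->|vn1] := eqVneq v 1; first by exists +oo%E.
have v0' : 0 < v by rewrite lt_neqAle eq_sym vn0.
have v1' : v < 1 by rewrite lt_neqAle vn1.
have e1 : 0 < 1 - v by rewrite subr_gt0.
have [M1 h1] := l1 (1 - v) e1.
have [M0 h0] := l0 v v0'.
have Ft : v < F (M1 + 1).
  have q1 : M1 < M1 + 1 by rewrite ltrDl.
  have := h1 (M1 + 1) q1.
  move=> /(le_lt_trans (ler_norm _)); lra.
have Fs : F (M0 - 1) < v.
  have q0 : M0 - 1 < M0 by rewrite ltrBlDr ltrDl.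
  have := h0 (M0 - 1) q0.
  move=> /(le_lt_trans (ler_norm _)); lra.
have cW a b : {within `[a, b], continuous F} by apply: continuous_subspaceT.
have [st|ts] := leP (M0 - 1) (M1 + 1).
- have hv : Num.min (F (M0 - 1)) (F (M1 + 1)) <= v <= Num.max (F (M0 - 1)) (F (M1 + 1)).
    by rewrite ge_min le_max (ltW Fs) (ltW Ft) orbT.
  by have [c _ fc] := IVT st (cW _ _) hv; exists c%:E.
- have hv : Num.min (F (M1 + 1)) (F (M0 - 1)) <= v <= Num.max (F (M1 + 1)) (F (M0 - 1)).
    by rewrite ge_min le_max (ltW Fs) (ltW Ft) orbT.
  by have [c _ fc] := IVT (ltW ts) (cW _ _) hv; exists c%:E.
Qed.
Lemma ptws_ereal_compactT (R : realType) (p : nat) :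
  compact [set: {ptws 'I_p -> \bar R}].
Proof.
have : compact ([set f : {ptws 'I_p -> \bar R} | forall i, [set: \bar R] (f i)]).
  exact: (@tychonoff _ (fun=> \bar R) (fun=> setT) (fun=> ereal_compactT R)).
by congr compact; apply/seteqP; split.
Qed.

Theorem lemma4p2 (R : realType) (p : nat)
  (H : ('I_p -> R) -> R) (F : 'I_p -> R -> R)
  (dn : nat -> measure_display) (Omn : forall n, measurableType (dn n))
  (Pn : forall n, probability (Omn n) R)
  (Hhat : forall n, Omn n -> ('I_p -> R) -> R)
  (Fhat : forall n, Omn n -> 'I_p -> R -> R)
  (r : nat -> R)
  (d : measure_display) (Om : measurableType d) (P : probability Om R)
  (alpha : Om -> ('I_p -> R) -> R) (beta : Om -> 'I_p -> R -> R) :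
  is_cdf_p_margins H F ->
  (forall j, continuous (F j)) ->
  (forall n w, is_cdf_p (Hhat n w)) ->
  (forall n w j, is_cdf1 (Fhat n w j)) ->
  (forall n, 0 < r n) ->
  r @ \oo --> +oo ->
  linf_borel (cube01 R p) alpha ->
  (forall j, linf_borel (unit01 R) (fun w => beta w j)) ->
  hj_weak_cvg Pn
    (fun n w => pack (fun x => r n * (Hhat n w x - H x))
                     (fun j t => r n * (Fhat n w j t - F j t)))
    P
    (fun w => pack (fun x => alpha w (fun j => F j (x j)))
                   (fun j t => beta w j (F j t))) ->
  {ae P, forall w,
     continuous (fun x : {ptws 'I_p -> \bar R} => alpha w (fun j => ext_cdf (F j) (x j)))
     /\ forall j, continuous (fun t : \bar R => beta w j (ext_cdf (F j) t))} ->
  {ae P, forall w,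
     {within (cube01 R p : set {ptws 'I_p -> R}),
        continuous (alpha w : {ptws 'I_p -> R} -> R)} /\
     forall j, {within unit01 R, continuous (beta w j)}}.
Proof.
move=> hm cF _ _ _ _ _ _ _.
have lims := @margin_lims R p H F hm.
have ce j : continuous (ext_cdf (F j) : \bar R -> R).
  by have [l1 l0] := lims j; exact: (@ext_cdf_cont R (F j) (cF j) l1 l0).
have se j v : 0 <= v <= 1 -> exists x, ext_cdf (F j) x = v.
  by have [l1 l0] := lims j; exact: (@ext_cdf_surj R (F j) (cF j) l1 l0).
pose G (x : {ptws 'I_p -> \bar R}) : {ptws 'I_p -> R} := fun j => ext_cdf (F j) (x j).
have cG : continuous G.
  move=> x; apply: (@cvg_ptws 'I_p R {ptws 'I_p -> \bar R} (nbhs x) _ G (G x)) => i.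
  have P1 : (fun y : {ptws 'I_p -> \bar R} => y i) @ nbhs x --> x i.
    exact: (@proj_continuous 'I_p (fun=> \bar R) i x).
  exact: (cvg_comp _ _ P1 (ce i (x i))).
have sG : forall v : {ptws 'I_p -> R}, cube01 R p v -> exists x, G x = v.
  move=> v hv.
  have [x hx] := choice (fun j => se j (v j) (hv j)).
  by exists x; apply/funext => j; exact: hx.
have cpK := @ptws_ereal_compactT R p.
have hY : hausdorff_space {ptws 'I_p -> R}.
  by apply: hausdorff_product => _; exact: Rhausdorff.
apply: filterS => w [ha hb]; split.
- exact: (@closed_map_within {ptws 'I_p -> \bar R} {ptws 'I_p -> R} R G (alpha w) (cube01 R p) cpK hY cG sG ha).
- move=> j.
  exact: (@closed_map_within (\bar R) R R (ext_cdf (F j)) (beta w j) (unit01 R) (ereal_compactT R) (@Rhausdorff R) (ce j) (se j) (hb j)).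
Qed.
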